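(* Let $k\ge 2$ be an integer and $\widehat B=\begin{pmatrix}\hat e&\hat f\\\hat g&\hat h\end{pmatrix}\in M_2(\mathbb Z_k)$, where $e,f,g,h\in\mathbb Z$. Then $|\mathrm{Cen}_{M_2(\mathbb Z_k)}(\widehat B)|=(kd)^2$, where $d=\gcd(e-h,f,g,k)$.
   Context: $\mathbb Z_k=\mathbb Z/k\mathbb Z$, $\hat x$ the residue of $x$; $\mathrm{Cen}_S(s)=\{t\in S:ts=st\}$. *)

(* Defs.v *)
From HB Require Import structures.
From mathcomp Require Import all_boot all_order all_algebra.
Set Implicit Arguments. Unset Strict Implicit. Unset Printing Implicit Defensive.
Import GRing.Theory Num.Theory.

Definition Cen (T : finType) (mul : T -> T -> T) (s : T) : {set T} :=
  [set t | mul t s == mul s t].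

Definition matZk (k : nat) (e f g h : int) : 'M['Z_k]_2 :=
  \matrix_(i < 2, j < 2)
    ((if (i == 0 :> nat) then (if (j == 0 :> nat) then e else f)
      else (if (j == 0 :> nat) then g else h)) %:~R)%R.

(* Main.v *)
Require Import Defs.
From HB Require Import structures.
From mathcomp Require Import all_boot all_order all_algebra.
From mathcomp Require Import ring.
Import GRing.Theory Num.Theory.
Set Implicit Arguments. Unset Strict Implicit. Unset Printing Implicit Defensive.
Lemma count_mult a b : 0 < a -> \sum_(0 <= s < b * a) (a %| s) = b.
Proof.
move=> a0; elim: b => [|b IH]; first by rewrite mul0n big_geq.
rewrite mulSn addnC (@big_cat_nat _ _ _ (b * a)) //= ?leq_addr // IH.
rewrite -{1}[b * a]add0n big_addn addKn.
rewrite big_ltn // add0n dvdn_mull // big_nat_cond big1 ?addn0 ?addn1 //.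
move=> i; rewrite andbT => /andP[i1 i2]; rewrite dvdn_addl ?dvdn_mull //.
by case: (boolP (a %| i)) => // /(dvdn_leq i1); rewrite leqNgt i2.
Qed.

Lemma card_mult n a : 0 < a -> a %| n -> #|[set s : 'I_n | a %| s]| = n %/ a.
Proof.
move=> a0 an.
rewrite -sum1dep_card big_mkcond /=.
rewrite (eq_bigr (fun s : 'I_n => nat_of_bool (a %| s))); last by move=> i _; case: (a %| i).
rewrite -(big_mkord xpredT (fun s => nat_of_bool (a %| s))).
by rewrite -{1}(divnK an) count_mult.
Qed.

Lemma card_ann n D : 0 < n -> #|[set s : 'I_n | n %| D * s]| = gcdn D n.
Proof.
move=> n0; set g := gcdn D n.
have g0 : 0 < g by rewrite gcdn_gt0 n0 orbT.
have gn : g %| n by apply: dvdn_gcdr.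
set n' := n %/ g.
have en : n = n' * g by rewrite divnK.
have n'0 : 0 < n' by rewrite divn_gt0 // dvdn_leq.
have -> : [set s : 'I_n | n %| D * s] = [set s : 'I_n | n' %| s].
  apply/setP => s; rewrite !inE.
  have -> : (n %| D * s) = (n %| gcdn (D * s) (n * s)).
    by rewrite dvdn_gcd (dvdn_mulr _ (dvdnn n)) andbT.
  rewrite -muln_gcdl -/g {1}en mulnC dvdn_pmul2l //.
rewrite card_mult //; last by rewrite en dvdn_mulr.
by rewrite {1}en mulKn.
Qed.

Local Open Scope ring_scope.

Lemma card_bij (T U : finType) (A : {set T}) (B : {set U}) (f : T -> U) (g : U -> T) :
  {in A, forall x, f x \in B} -> {in B, forall y, g y \in A} ->
  {in A, cancel f g} -> {in B, cancel g f} -> #|A| = #|B|.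
Proof.
move=> fA gB fK gK.
rewrite -(@card_in_imset _ _ f A); last first.
  by move=> x1 x2 h1 h2 e; rewrite -(fK x1 h1) e fK.
suff -> : f @: A = B by []. apply/setP => y; apply/imsetP/idP => [[x xA ->]|yB]; first exact: fA.
by exists (g y); [exact: gB | rewrite gK].
Qed.

Lemma eq_by (R : ringType) (A B X : R) : A - B = X -> X = 0 -> A == B.
Proof. by move=> h1 h2; rewrite -subr_eq0 h1 h2. Qed.

Definition Pc (R : ringType) (E f g : R) (y : R * R * R) : bool :=
  [&& f * y.1.1 == E * y.1.2, g * y.1.1 == E * y.2 & g * y.1.2 == f * y.2].

Section Count.
Variable k : nat.
Local Notation R := 'Z_k.
Variables d p q r u1 u2 u3 : R.
Hypothesis Hs : u1 * p + u2 * q + u3 * r = 1.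

Definition dot (y : R * R * R) := u1 * y.1.1 + u2 * y.1.2 + u3 * y.2.
Definition subv (t : R) (y : R * R * R) := (y.1.1 - t * p, y.1.2 - t * q, y.2 - t * r).
Definition addv (t : R) (y : R * R * R) := (y.1.1 + t * p, y.1.2 + t * q, y.2 + t * r).
Definition Zset := [set z : R * R * R |
  [&& d * z.1.1 == 0, d * z.1.2 == 0, d * z.2 == 0 & dot z == 0]].
Definition Sset := [set y : R * R * R | Pc (d * p) (d * q) (d * r) y].
Definition T1 := [set s : R | d * s == 0].
Definition Tset := [set z : R * R * R | [&& d * z.1.1 == 0, d * z.1.2 == 0 & d * z.2 == 0]].

Lemma dot_add t z : dot (addv t z) = t + dot z.
Proof.
have -> : dot (addv t z) = t * (u1 * p + u2 * q + u3 * r) + dot z.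
  by rewrite /dot /addv /=; ring.
by rewrite Hs mulr1.
Qed.

Lemma dot_sub y : dot (subv (dot y) y) = 0.
Proof.
have -> : dot (subv (dot y) y) = dot y * (1 - (u1 * p + u2 * q + u3 * r)).
  by rewrite /dot /subv /=; ring.
by rewrite Hs subrr mulr0.
Qed.

Lemma addK t z : subv t (addv t z) = z.
Proof. case: z => [[x b] c]; rewrite /subv /addv /=; congr (_, _, _); ring. Qed.

Lemma subK t y : addv t (subv t y) = y.
Proof. case: y => [[x b] c]; rewrite /subv /addv /=; congr (_, _, _); ring. Qed.

Lemma cardS : #|Sset| = #|setX [set: R] Zset|.
Proof.
apply: (@card_bij _ _ _ _ (fun y => (dot y, subv (dot y) y)) (fun w => addv w.1 w.2)).
- case=> [[x b] c]; rewrite !inE /Pc /= => /and3P[/eqP h1 /eqP h2 /eqP h3].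
  set t := dot _.
  have hs : 1 - (u1 * p + u2 * q + u3 * r) = 0 by rewrite Hs subrr.
  apply/and4P; split.
  + apply/eqP; have -> : d * (x - t * p) =
      d * x * (1 - (u1 * p + u2 * q + u3 * r)) + u2 * (d * q * x - d * p * b)
      + u3 * (d * r * x - d * p * c) by rewrite /t /dot /=; ring.
    by rewrite hs h1 h2 !subrr !mulr0 !addr0.
  + apply/eqP; have -> : d * (b - t * q) =
      d * b * (1 - (u1 * p + u2 * q + u3 * r)) + u1 * (d * p * b - d * q * x)
      + u3 * (d * r * b - d * q * c) by rewrite /t /dot /=; ring.
    by rewrite hs h1 h3 !subrr !mulr0 !addr0.
  + apply/eqP; have -> : d * (c - t * r) =
      d * c * (1 - (u1 * p + u2 * q + u3 * r)) + u1 * (d * p * c - d * r * x)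
      + u2 * (d * q * c - d * r * b) by rewrite /t /dot /=; ring.
    by rewrite hs h2 h3 !subrr !mulr0 !addr0.
  + by apply/eqP; apply: dot_sub.
- case=> t [[x b] c]; rewrite !inE /= => /and4P[/eqP h1 /eqP h2 /eqP h3 _].
  rewrite /Pc /addv /=; apply/and3P; split.
  + by apply: (eq_by (X := q * (d * x) - p * (d * b))); [ring | rewrite h1 h2 !mulr0 subrr].
  + by apply: (eq_by (X := r * (d * x) - p * (d * c))); [ring | rewrite h1 h3 !mulr0 subrr].
  + by apply: (eq_by (X := r * (d * b) - q * (d * c))); [ring | rewrite h2 h3 !mulr0 subrr].
- by move=> y _ /=; rewrite subK.
- case=> t z; rewrite !inE /= => /and4P[_ _ _ /eqP hz].
  by rewrite dot_add hz addr0 addK.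
Qed.

Lemma cardT : #|Tset| = #|setX T1 Zset|.
Proof.
apply: (@card_bij _ _ _ _ (fun y => (dot y, subv (dot y) y)) (fun w => addv w.1 w.2)).
- case=> [[x b] c]; rewrite !inE /= => /and3P[/eqP h1 /eqP h2 /eqP h3].
  have hd : d * dot (x, b, c) = 0.
    have -> : d * dot (x, b, c) = u1 * (d * x) + u2 * (d * b) + u3 * (d * c)
      by rewrite /dot /=; ring.
    by rewrite h1 h2 h3 !mulr0 !addr0.
  apply/andP; split; first by apply/eqP.
  apply/and4P; split.
  + apply/eqP; have -> : d * (x - dot (x, b, c) * p) = d * x - p * (d * dot (x, b, c))
      by ring.
    by rewrite hd h1 mulr0 subrr.
  + apply/eqP; have -> : d * (b - dot (x, b, c) * q) = d * b - q * (d * dot (x, b, c))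
      by ring.
    by rewrite hd h2 mulr0 subrr.
  + apply/eqP; have -> : d * (c - dot (x, b, c) * r) = d * c - r * (d * dot (x, b, c))
      by ring.
    by rewrite hd h3 mulr0 subrr.
  + by apply/eqP; apply: dot_sub.
- case=> t [[x b] c]; rewrite !inE /= => /andP[/eqP ht /and4P[/eqP h1 /eqP h2 /eqP h3 _]].
  apply/and3P; split; apply/eqP.
  + have -> : d * (x + t * p) = d * x + p * (d * t) by ring.
    by rewrite ht h1 mulr0 addr0.
  + have -> : d * (b + t * q) = d * b + q * (d * t) by ring.
    by rewrite ht h2 mulr0 addr0.
  + have -> : d * (c + t * r) = d * c + r * (d * t) by ring.
    by rewrite ht h3 mulr0 addr0.
- by move=> y _ /=; rewrite subK.
- case=> t z; rewrite !inE /= => /andP[_ /and4P[_ _ _ /eqP hz]].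
  by rewrite dot_add hz addr0 addK.
Qed.

Lemma TsetX : Tset = setX (setX T1 T1) T1.
Proof. by apply/setP => -[[x b] c]; rewrite !inE /= andbA. Qed.

Lemma cardS_final : #|Sset| = (#|R| * #|T1| ^ 2)%N.
Proof.
have hT := cardT; rewrite TsetX !cardsX in hT.
have t0 : (0 < #|T1|)%N by apply/card_gt0P; exists 0; rewrite inE mulr0.
rewrite cardS cardsX cardsT; congr (_ * _)%N.
apply/eqP; rewrite -(eqn_pmul2l t0) -hT; apply/eqP.
by rewrite expnS; rewrite mulnA.
Qed.
End Count.

Lemma ord2 (i : 'I_2) : i = 0 \/ i = 1.
Proof. case: i => [[|[|?]] ?]; [left|right|by []]; by apply: val_inj. Qed.

Lemma sum2 (R : nmodType) (F : 'I_2 -> R) : \sum_(i < 2) F i = F 0 + F 1.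
Proof. by rewrite !big_ord_recl big_ord0 addr0; congr (_ + F _); apply: val_inj. Qed.

Lemma cen_eq k e f g h (M : 'M['Z_k]_2) :
  (M *m matZk k e f g h == matZk k e f g h *m M) =
  Pc (e%:~R - h%:~R) f%:~R g%:~R (M 0 0 - M 1 1, M 0 1, M 1 0).
Proof.
apply/idP/idP.
- move/eqP => H.
  have H00 := congr1 (fun N : 'M['Z_k]_2 => N 0 0) H.
  have H01 := congr1 (fun N : 'M['Z_k]_2 => N 0 1) H.
  have H10 := congr1 (fun N : 'M['Z_k]_2 => N 1 0) H.
  rewrite /= !mxE !sum2 !mxE /= in H00 H01 H10.
  move: H00 H01 H10.
  set a := M 0 0; set b := M 0 1; set c := M 1 0; set d := M 1 1.
  set e' := (e%:~R : 'Z_k); set f' := (f%:~R : 'Z_k); set g' := (g%:~R : 'Z_k);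
  set h' := (h%:~R : 'Z_k) => H00 H01 H10.
  rewrite /Pc /=; apply/and3P; split.
  + by apply: (eq_by (X := (a * f' + b * h') - (e' * b + f' * d))); [ring | rewrite H01 subrr].
  + by apply: (eq_by (X := - ((c * e' + d * g') - (g' * a + h' * c)))); [ring | rewrite H10 subrr oppr0].
  + by apply: (eq_by (X := (a * e' + b * g') - (e' * a + f' * c))); [ring | rewrite H00 subrr].
- set a := M 0 0; set b := M 0 1; set c := M 1 0; set d := M 1 1.
  set e' := (e%:~R : 'Z_k); set f' := (f%:~R : 'Z_k); set g' := (g%:~R : 'Z_k);
  set h' := (h%:~R : 'Z_k).
  rewrite /Pc /= => /and3P[/eqP h1 /eqP h2 /eqP h3].
  apply/eqP/matrixP => i j; rewrite !mxE !sum2 !mxE.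
  case: (ord2 i) => ->; case: (ord2 j) => -> /=; apply/eqP.
  + by apply: (eq_by (X := g' * b - f' * c)); [rewrite /a /b /c /d; ring | rewrite h3 subrr].
  + by apply: (eq_by (X := f' * (a - d) - (e' - h') * b)); [rewrite /a /b /c /d; ring | rewrite h1 subrr].
  + by apply: (eq_by (X := - (g' * (a - d) - (e' - h') * c))); [rewrite /a /b /c /d; ring | rewrite h2 subrr oppr0].
  + by apply: (eq_by (X := - (g' * b - f' * c))); [rewrite /a /b /c /d; ring | rewrite h3 subrr oppr0].
Qed.

Definition mk2 (R : Type) (a b c d : R) : 'M[R]_2 :=
  \matrix_(i < 2, j < 2) (if i == 0 then (if j == 0 then a else b) else (if j == 0 then c else d)).

Lemma cen_card k e f g h :
  #|Cen (@mulmx 'Z_k 2 2 2) (matZk k e f g h)| =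
  (#|[set y : 'Z_k * 'Z_k * 'Z_k | Pc (e%:~R - h%:~R) f%:~R g%:~R y]| * #|'Z_k|)%N.
Proof.
rewrite -cardsT -cardsX.
apply: (@card_bij _ _ _ _ (fun M : 'M['Z_k]_2 => ((M 0 0 - M 1 1, M 0 1, M 1 0), M 1 1))
   (fun w => mk2 (w.1.1.1 + w.2) w.1.1.2 w.1.2 w.2)).
- by move=> M; rewrite !inE -cen_eq andbT.
- case=> [[[x b] c] d]; rewrite !inE andbT => hP.
  rewrite cen_eq /mk2 !mxE /=.
  by rewrite addrK.
- move=> M _ /=; apply/matrixP => i j; rewrite !mxE.
  by case: (ord2 i) => ->; case: (ord2 j) => -> /=; rewrite ?subrK.
- case=> [[[x b] c] d] _; rewrite /mk2 !mxE /=.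
  by rewrite addrK.
Qed.

Lemma decomp (E f g : int) :
  exists E' f' g' u1 u2 u3 : int,
  [/\ E = (gcdn (gcdn `|E| `|f|) `|g|)%:Z * E', f = (gcdn (gcdn `|E| `|f|) `|g|)%:Z * f',
      g = (gcdn (gcdn `|E| `|f|) `|g|)%:Z * g' & u1 * E' + u2 * f' + u3 * g' = 1].
Proof.
set D := gcdn (gcdn `|E| `|f|) `|g|.
have dE : (D %| `|E|)%N by rewrite /D (dvdn_trans (dvdn_gcdl _ _)) ?dvdn_gcdl.
have dF : (D %| `|f|)%N by rewrite /D (dvdn_trans (dvdn_gcdl _ _)) ?dvdn_gcdr.
have dG : (D %| `|g|)%N by rewrite /D dvdn_gcdr.
have [D0|Dn0] := eqVneq D 0%N.
  move: dE dF dG; rewrite D0 !dvd0n !absz_eq0 => /eqP-> /eqP-> /eqP->.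
  by exists 1, 0, 0, 1, 0, 0; split; rewrite ?mulr0 ?mul0r //; ring.
have hdiv x : (D %| `|x|)%N -> x = D%:Z * (x %/ D%:Z)%Z.
  by move=> h; rewrite mulrC divzK // dvdzE absz_nat.
exists (E %/ D%:Z)%Z, (f %/ D%:Z)%Z, (g %/ D%:Z)%Z.
have [a [b hab]] := Bezoutz E f.
have [c [w hcw]] := Bezoutz (gcdz E f) g.
exists (c * a), (c * b), w.
split; try exact: hdiv.
have hD : gcdz (gcdz E f) g = D%:Z by rewrite /gcdz absz_nat.
move: (hdiv E dE) (hdiv f dF) (hdiv g dG).
set E' := (E %/ D%:Z)%Z; set f' := (f %/ D%:Z)%Z; set g' := (g %/ D%:Z)%Z.
clearbody E' f' g' => hE hF hG.
apply: (@mulfI _ D%:Z); first by rewrite eqz_nat.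
have -> : D%:Z * 1 = c * (a * E + b * f) + w * g by rewrite mulr1 hab hcw hD.
rewrite hE hF hG; ring.
Qed.

Lemma cardT1 k D : (1 < k)%N -> #|[set s : 'Z_k | (D%:R : 'Z_k) * s == 0]| = gcdn D k.
Proof.
move=> hk.
have -> : [set s : 'Z_k | (D%:R : 'Z_k) * s == 0] =
          [set s : 'Z_k | ((Zp_trunc k).+2 %| D * s)%N].
  apply/setP => s; rewrite !inE.
  have E x : (x %% k == 0)%N = (x %% (Zp_trunc k).+2 == 0)%N by rewrite Zp_cast.
  by rewrite -[s in D%:R * s]natr_Zp -natrM -val_eqE /= val_Zp_nat // E.
rewrite card_ann //.
by rewrite Zp_cast.
Qed.

Local Close Scope ring_scope.

Theorem corollary3p9 (k : nat) (e f g h : int) : (1 < k)%N ->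
  #|Cen (@mulmx 'Z_k 2 2 2) (matZk k e f g h)| =
  (k * gcdn (gcdn (gcdn `|e - h|%N `|f|%N) `|g|%N) k) ^ 2.
Proof.
move=> hk; rewrite cen_card.
Local Open Scope ring_scope.
have [E' [f' [g' [u1 [u2 [u3 [hE hF hG hu]]]]]]] := decomp (e - h) f g.
set D := gcdn (gcdn `|e - h|%N `|f|%N) `|g|%N in hE hF hG *.
have Hs : ((u1%:~R : 'Z_k) * E'%:~R + u2%:~R * f'%:~R + u3%:~R * g'%:~R = 1)%R.
  by rewrite -!intrM -!intrD hu.
have -> : (e%:~R - h%:~R : 'Z_k)%R = (D%:R * E'%:~R)%R by rewrite -intrB hE intrM.
have -> : (f%:~R : 'Z_k) = (D%:R * f'%:~R)%R by rewrite {1}hF intrM.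
have -> : (g%:~R : 'Z_k) = (D%:R * g'%:~R)%R by rewrite {1}hG intrM.
have := cardS_final (D%:R) Hs; rewrite /Sset => ->.
rewrite cardT1 // card_ord Zp_cast //.
by rewrite mulnAC mulnn -expnMn.
Qed.
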